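(* Let $(X^4,\gamma)=(I\times M^3, -N^2 dt^2+g)$ be a globally hyperbolic spacetime written in the form described in the context. Then: (1) for every $t\in I$, every $x\in M$ and every tangent vector $V\in T_xM$ (with components $V^i$ in local coordinates on $M$), $$\frac{1}{2N^2}\left(\partial^2_{tt} g_{ij} V^i V^j+2h_{ij}V^i V^j\partial_t N\right)\leq [1-q(t)]\frac{|h_{ij}V^i V^j|^2}{g(V,V)}\quad\text{at }(t,x);$$ (2) for $t_0\in I$, the leaf $M_{t_0}$ is energy-decelerating in all directions if and only if, at $t=t_0$ and at every point of $M$, $$\partial^2_{tt} g_{ij} +2h_{ij}\partial_t N\leq 0$$ in the sense of quadratic forms.
   Context: $I\subset\mathbb{R}$ is an interval, $M^3$ a smooth three-manifold without boundary, $N=N(t,x)>0$ the lapse function and $g=g_{ij}(t,x)dx^idx^j$ a $t$-dependent Riemannian metric on $M$ (the first fundamental form of the leaves $M_t=\{t\}\times M$). Set $\overline{\partial}_t=\frac1N\partial_t$. The second fundamental form of the foliation is $h_{ij}=-\frac{1}{2N}\partial_t g_{ij}$. For $V\in T_xM$ (viewed as fixed, independent of $t$), write $|V|=\sqrt{g(V,V)}$, a function of $t$. The deceleration parameter is $$q(t):=\inf \Big\{q\in\mathbb R: \big(\overline{\partial}^2_{tt} |V|\big)\, |V|\leq -q \left(\overline{\partial}_t |V|\right)^2 \text{ at }(t,x),\ \forall x\in M,\ \forall V\in T_xM\Big\}.$$ The leaf $M_{t_0}$ is called energy-decelerating in all directions if for every smooth curve $\sigma:J\subset\mathbb{R}\to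 M$, $$\int_{\sigma} \overline{\partial}^2_{tt}|\dot\sigma|^2\Big|_{t=t_0} \leq 0,$$ where $|\dot\sigma|^2=g(\dot\sigma,\dot\sigma)$ and the integral is over the parameter of $\sigma$. *)

(* Defs.v *)
From HB Require Import structures.
From mathcomp Require Import all_boot all_order all_algebra.
From mathcomp Require Import all_classical all_reals all_analysis.
Set Implicit Arguments. Unset Strict Implicit. Unset Printing Implicit Defensive.
Import Order.TTheory GRing.Theory Num.Theory.
Import numFieldNormedType.Exports.
Local Open Scope classical_set_scope.
Local Open Scope ring_scope.

Section Defs.
Variable R : realType.

Fixpoint dder {V W : normedModType R} (vs : seq V) (f : V -> W) : V -> W :=
  match vs with
  | [::] => f
  | v :: vs' => fun p => derive (dder vs' f) p v
  end.

Definition smooth_on {V W : normedModType R} (U : set V) (f : V -> W) :=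
  open U /\
  forall (vs : seq V) (p : V), U p ->
    (forall v, derivable (dder vs f) p v) /\ {for p, continuous (dder vs f)}.

Record smooth_manifold3 (M : Type) := {
  chart_idx : Type;
  cdom : chart_idx -> set M;
  phi : chart_idx -> M -> 'rV[R]_3;
  psi : chart_idx -> 'rV[R]_3 -> M;
  charts_cover : forall x, exists a, cdom a x;
  psi_phi : forall a x, cdom a x -> psi a (phi a x) = x;
  phi_psi : forall a y, (phi a @` cdom a) y -> cdom a (psi a y) /\ phi a (psi a y) = y;
  overlap_open : forall a b, open (phi a @` (cdom a `&` cdom b));
  transition_smooth : forall a b,
    smooth_on (phi a @` (cdom a `&` cdom b)) (fun y => phi b (psi a y))
}.

Variable M : Type.
Variable A : smooth_manifold3 M.

Definition quad (G : 'M[R]_3) (v : 'rV[R]_3) : R :=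
  \sum_(i < 3) \sum_(j < 3) G i j * v 0 i * v 0 j.

(* Data of the spacetime (I x M, -N^2 dt^2 + g): I an (open) interval,
   N : I x M -> R positive lapse, g given by its components g a t y
   in each chart a (y = phi a x), smooth, symmetric, positive definite,
   and transforming as a (0,2)-tensor under chart changes. *)
Definition lorentz_data (I : set R) (N : R -> M -> R)
  (g : chart_idx A -> R -> 'rV[R]_3 -> 'M[R]_3) :=
  [/\ is_interval I /\ open I /\ I !=set0,
      (forall t x, I t -> 0 < N t x),
      (forall a : chart_idx A, smooth_on (I `*` (phi a @` cdom a))
                           (fun p : R * 'rV[R]_3 => N p.1 (psi a p.2))),
      (forall (a : chart_idx A) i j, smooth_on (I `*` (phi a @` cdom a))
                           (fun p : R * 'rV[R]_3 => g a p.1 p.2 i j)) &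
     [/\ (forall (a : chart_idx A) t y i j, I t -> (phi a @` cdom a) y -> g a t y i j = g a t y j i),
      (forall (a : chart_idx A) t y (v : 'rV[R]_3), I t -> (phi a @` cdom a) y -> v != 0 -> 0 < quad (g a t y) v) &
      (forall (a b : chart_idx A) t x (v : 'rV[R]_3), I t -> cdom a x -> cdom b x ->
         quad (g a t (phi a x)) v =
         quad (g b t (phi b x)) (derive (fun y => phi b (psi a y)) (phi a x) v))]].

Definition dt_g (g : chart_idx A -> R -> 'rV[R]_3 -> 'M[R]_3) a t y : 'M[R]_3 :=
  \matrix_(i, j) derive1 (fun s => g a s y i j) t.
Definition dtt_g (g : chart_idx A -> R -> 'rV[R]_3 -> 'M[R]_3) a t y : 'M[R]_3 :=
  \matrix_(i, j) derive1n 2 (fun s => g a s y i j) t.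
Definition dt_N (N : R -> M -> R) t x : R := derive1 (fun s => N s x) t.

Definition sff (N : R -> M -> R) (g : chart_idx A -> R -> 'rV[R]_3 -> 'M[R]_3) (a : chart_idx A) t x : 'M[R]_3 :=
  (- (2 * N t x)^-1) *: dt_g g a t (phi a x).

Definition dbar (N : R -> M -> R) (x : M) (f : R -> R) : R -> R :=
  fun t => (N t x)^-1 * derive1 f t.

Definition vnorm (g : chart_idx A -> R -> 'rV[R]_3 -> 'M[R]_3) (a : chart_idx A) (x : M) (v : 'rV[R]_3) : R -> R :=
  fun t => Num.sqrt (quad (g a t (phi a x)) v).

(* q is admissible in the definition of the deceleration parameter at t:
   (bar-d_tt |V|) |V| <= - q (bar-d_t |V|)^2 at (t,x) for all x, V *)
Definition decel_admissible (N : R -> M -> R) (g : chart_idx A -> R -> 'rV[R]_3 -> 'M[R]_3) (t q : R) :=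
  forall (a : chart_idx A) x (v : 'rV[R]_3), cdom a x ->
    dbar N x (dbar N x (vnorm g a x v)) t * vnorm g a x v t
      <= - q * (dbar N x (vnorm g a x v) t) ^+ 2.

Definition smooth_curve (J : set R) (sigma : R -> M) :=
  exists O : set R, [/\ open O, J `<=` O &
    forall s, O s -> exists (a : chart_idx A) (W : set R),
      [/\ cdom a (sigma s), open W /\ W s, W `<=` O,
          sigma @` W `<=` cdom a &
          smooth_on W (fun r : R => phi a (sigma r))]].

Definition curve_sqspeed (g : chart_idx A -> R -> 'rV[R]_3 -> 'M[R]_3) (a : chart_idx A) (sigma : R -> M) (s : R) : R -> R :=
  fun t => quad (g a t (phi a (sigma s)))
                (derive (fun r : R => phi a (sigma r)) s 1).

(* M_{t0} is energy-decelerating in all directions: for every smooth curve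
   sigma on an interval J, int_J bar-d_tt |sigma'|^2 (t0) ds <= 0; the
   integrand e is characterised by its value in any chart containing sigma s *)
Definition energy_decelerating (N : R -> M -> R) (g : chart_idx A -> R -> 'rV[R]_3 -> 'M[R]_3) (t0 : R) :=
  forall (J : set R) (sigma : R -> M) (e : R -> R),
    is_interval J -> smooth_curve J sigma ->
    (forall s (a : chart_idx A), J s -> cdom a (sigma s) ->
       e s = dbar N (sigma s) (dbar N (sigma s) (curve_sqspeed g a sigma s)) t0) ->
    (\int[@lebesgue_measure R]_(s in J) (e s)%:E <= 0)%E.

End Defs.

(* Main.v *)
Require Import Defs.
From HB Require Import structures.
From mathcomp Require Import all_boot all_order all_algebra.
From mathcomp Require Import all_classical all_reals all_analysis.
From mathcomp Require Import ring lra.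
Import Order.TTheory GRing.Theory Num.Theory.
Import numFieldNormedType.Exports.
Local Open Scope classical_set_scope.
Local Open Scope ring_scope.

Section Gen.
Variable R : realType.

Lemma quadD (F G : 'M[R]_3) w : quad (F + G) w = quad F w + quad G w.
Proof.
rewrite /quad -big_split; apply: eq_bigr => i _; rewrite -big_split.
by apply: eq_bigr => j _; rewrite mxE !mulrDl.
Qed.

Lemma quadZ c (F : 'M[R]_3) w : quad (c *: F) w = c * quad F w.
Proof.
rewrite /quad mulr_sumr; apply: eq_bigr => i _; rewrite mulr_sumr.
by apply: eq_bigr => j _; rewrite mxE !mulrA.
Qed.

Lemma quad0 (F : 'M[R]_3) : quad F 0 = 0.
Proof.
rewrite /quad; apply: big1 => i _; apply: big1 => j _.
by rewrite (_ : (0 : 'rV[R]_3) 0 j = 0) ?mulr0 // mxE.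
Qed.

Lemma quad_cont {T : topologicalType} (F : T -> 'M[R]_3) w p :
  (forall i j, {for p, continuous (fun q => F q i j)}) ->
  {for p, continuous (fun q => quad (F q) w)}.
Proof.
move=> hc.
have -> : (fun q => quad (F q) w) = \sum_(i < 3) \sum_(j < 3) (fun q => F q i j * w 0 i * w 0 j).
  apply/funext => s; rewrite /quad fct_sumE; apply: eq_bigr => i _.
  by rewrite fct_sumE.
apply: (big_ind (fun f : T -> R => {for p, continuous f})).
- exact: cst_continuous.
- by move=> f1 f2; exact: continuousD.
move=> i _; apply: (big_ind (fun f : T -> R => {for p, continuous f})).
- exact: cst_continuous.
- by move=> f1 f2; exact: continuousD.
move=> j _; apply: continuousM; last exact: cst_continuous.
by apply: continuousM => //; exact: cst_continuous.
Qed.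

Lemma affine_fun {V : normedModType R} {W : normedModType R} (F : V -> W) (v y : V) s :
  (fun h : R => h^-1 *: ((fun r : R => F (r *: v + y)) (h *: (1:R) + s) - F (s *: v + y))) =
  (fun h : R => h^-1 *: (F (h *: v + (s *: v + y)) - F (s *: v + y))).
Proof.
apply/funext => h /=; congr (_ *: (F _ - _)).
by rewrite [h *: 1]mulr1 scalerDl addrA.
Qed.

Lemma derive_affine {V W : normedModType R} (F : V -> W) (v y : V) s :
  'D_1 (fun r : R => F (r *: v + y)) s = 'D_v F (s *: v + y).
Proof. by rewrite /derive affine_fun. Qed.

Lemma dder_local {V W : normedModType R} (O : set V) (f g : V -> W) :
  open O -> (forall p, O p -> f p = g p) ->
  forall vs p, O p -> dder vs f p = dder vs g p.
Proof.
move=> oO fg; elim=> [|u vs IH] p Op /=; first exact: fg.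
apply: near_eq_derive.
have : nbhs p O by apply: open_nbhs_nbhs; split.
by apply: filterS => q Oq; apply: IH.
Qed.

Lemma ge0_le_integral_nm (D : set R) (f1 f2 : R -> \bar R) :
  (forall x, D x -> (0 <= f1 x)%E) -> (forall x, D x -> (f1 x <= f2 x)%E) ->
  (\int[@lebesgue_measure R]_(x in D) f1 x <= \int[@lebesgue_measure R]_(x in D) f2 x)%E.
Proof.
move=> f10 f12.
have f20 : forall x, D x -> (0 <= f2 x)%E by move=> x Dx; exact: le_trans (f10 x Dx) (f12 x Dx).
rewrite [X in (X <= _)%E]ge0_integralE // [X in (_ <= X)%E]ge0_integralE // /=.
apply: le_ereal_sup => _ [h /= hf <-]; exists h => //= x.
apply: le_trans (hf x) _; rewrite /patch; case: ifP => // /set_mem Dx.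
exact: f12.
Qed.


Lemma e1_fun {W : normedModType R} n (f : R * 'rV[R]_n -> W) t y :
  (fun h : R => h^-1 *: (f (h *: ((1:R), (0:'rV[R]_n)) + (t, y)) - f (t, y))) =
  (fun h : R => h^-1 *: ((fun s => f (s, y)) (h *: (1:R) + t) - f (t, y))).
Proof.
apply/funext => h /=. congr (_ *: (f _ - _)).
rewrite [h *: _]/GRing.scale /= /scale_pair /=. rewrite scaler0.
by rewrite [_ + _]/GRing.add /= /add_pair /= add0r.
Qed.

Lemma derive_e1 {W : normedModType R} n (f : R * 'rV[R]_n -> W) t y :
  'D_((1:R), (0:'rV[R]_n)) f (t, y) = derive1 (fun s => f (s, y)) t.
Proof. by rewrite derive1E /derive e1_fun. Qed.

Lemma derivable_e1 {W : normedModType R} n (f : R * 'rV[R]_n -> W) t y :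
  derivable f (t, y) ((1:R), (0:'rV[R]_n)) <-> derivable (fun s => f (s, y)) t 1.
Proof. by rewrite /derivable e1_fun. Qed.

Lemma quad_derive (F : R -> 'M[R]_3) (w : 'rV[R]_3) t :
  (forall i j, derivable (fun s => F s i j) t 1) ->
  derivable (fun s => quad (F s) w) t 1 /\
  derive1 (fun s => quad (F s) w) t = quad (\matrix_(i,j) derive1 (fun s => F s i j) t) w.
Proof.
move=> hd.
have E : (fun s => quad (F s) w) = \sum_(i < 3) \sum_(j < 3) (fun s => F s i j * w 0 i * w 0 j).
  apply/funext => s; rewrite /quad fct_sumE; apply: eq_bigr => i _.
  by rewrite fct_sumE.
have hdij : forall i j, derivable (fun s => F s i j * w 0 i * w 0 j) t 1.
  move=> i j; apply: derivableM; last exact: derivable_cst.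
  by apply: derivableM => //; exact: derivable_cst.
have hdi : forall i, derivable (\sum_(j < 3) (fun s => F s i j * w 0 i * w 0 j)) t 1.
  by move=> i; apply: derivable_sum.
rewrite E; split; first exact: derivable_sum.
rewrite derive1E derive_sum //; rewrite /quad; apply: eq_bigr => i _.
rewrite derive_sum //; apply: eq_bigr => j _; rewrite mxE.
rewrite -derive1E derive1Mr; last first.
  by apply: derivableM => //; exact: derivable_cst.
by rewrite derive1Mr.
Qed.


Lemma cont_entry {T : topologicalType} (n dN d1 d2 : T -> R) p :
  n p != 0 -> {for p, continuous n} -> {for p, continuous dN} ->
  {for p, continuous d1} -> {for p, continuous d2} ->
  {for p, continuous (fun q => d2 q + 2 * dN q * (- (2 * n q)^-1 * d1 q))}.
Proof.
move=> n0 cn cdN cd1 cd2.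
have cc : {for p, continuous (fun=> (2:R))} by apply: cst_continuous.
have c2n : {for p, continuous (fun q => 2 * n q)}.
  exact: (@continuousM _ _ (fun=> 2) n p cc cn).
have c2ni : {for p, continuous (fun q => (2 * n q)^-1)}.
  by apply: (@continuousV _ _ (fun q => 2 * n q)) => //; rewrite mulf_neq0.
have c3 : {for p, continuous (fun q => - (2 * n q)^-1)}.
  exact: (@continuousN _ _ _ (fun q => (2 * n q)^-1) p c2ni).
have c4 : {for p, continuous (fun q => - (2 * n q)^-1 * d1 q)}.
  exact: (@continuousM _ _ (fun q => - (2 * n q)^-1) d1 p c3 cd1).
have c5 : {for p, continuous (fun q => 2 * dN q)}.
  exact: (@continuousM _ _ (fun=> 2) dN p cc cdN).
have c6 : {for p, continuous (fun q => 2 * dN q * (- (2 * n q)^-1 * d1 q))}.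
  exact: (@continuousM _ _ (fun q => 2 * dN q) (fun q => - (2 * n q)^-1 * d1 q) p c5 c4).
exact: (@continuousD _ _ _ d2 (fun q => 2 * dN q * (- (2 * n q)^-1 * d1 q)) p cd2 c6).
Qed.


Lemma aff_facts {V : normedModType R} (v y : V) :
  (forall p, differentiable (fun r : R => r *: v + y) p) /\
  (forall p u, 'D_u (fun r : R => r *: v + y) p = u *: v).
Proof.
have H : forall p : R, is_diff p (( *:%R^~ v) + cst y) (( *:%R^~ v) + 0).
  by move=> p; apply: is_diffD.
split=> [p|p u]; first by case: (H p).
case: (H p) => dp vp.
rewrite deriveE; last exact: dp.
change ('d (( *:%R^~ v) + cst y) p u = u *: v).
by rewrite vp /= addr0.
Qed.

Lemma dder_aff {V : normedModType R} (v y : V) vs : vs != [::] ->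
  exists k, dder vs (fun r : R => r *: v + y) = cst k.
Proof.
elim: vs => [//|u vs IH] _.
case: vs IH => [_|u' vs] /=.
  exists (u *: v); apply/funext => p; exact: (aff_facts v y).2.
move=> /(_ isT) [k Hk]; exists 0; apply/funext => p /=.
by rewrite /= in Hk; rewrite Hk derive_cst.
Qed.

Lemma aff_smooth {V : normedModType R} (v y : V) vs p :
  (forall u, derivable (dder vs (fun r : R => r *: v + y)) p u) /\
  {for p, continuous (dder vs (fun r : R => r *: v + y))}.
Proof.
case: (eqVneq vs [::]) => [->|vs0] /=.
  have dp := (aff_facts v y).1 p.
  split; [move=> u; exact: diff_derivable | exact: differentiable_continuous].
have [k ->] := dder_aff v y vs vs0.
split; [move=> u; exact: derivable_cst | exact: cst_continuous].
Qed.

End Gen.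

Section Main.
Variables (R : realType) (M : Type) (A : smooth_manifold3 R M) (I : set R)
  (N : R -> M -> R) (g : chart_idx A -> R -> 'rV[R]_3 -> 'M[R]_3).
Hypothesis HL : lorentz_data I N g.

Let U (a : chart_idx A) := phi a @` cdom a.
Let G (a : chart_idx A) (i j : 'I_3) : R * 'rV[R]_3 -> R := fun p => g a p.1 p.2 i j.
Let Nf (a : chart_idx A) : R * 'rV[R]_3 -> R := fun p => N p.1 (psi a p.2).
Local Notation e1 := ((1:R), (0:'rV[R]_3)).

Lemma oI : open I. Proof. by case: HL => -[_ []]. Qed.
Lemma Npos t x : I t -> 0 < N t x. Proof. by case: HL => _ h _ _ _; apply: h. Qed.

Lemma smG (a : chart_idx A) i j vs t y : I t -> U a y ->
  (forall u, derivable (dder vs (G a i j)) (t, y) u) /\ {for (t, y), continuous (dder vs (G a i j))}.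
Proof. by case: HL => _ _ _ hG _ It Uy; apply: (hG a i j).2. Qed.

Lemma smN (a : chart_idx A) vs t y : I t -> U a y ->
  (forall u, derivable (dder vs (Nf a)) (t, y) u) /\ {for (t, y), continuous (dder vs (Nf a))}.
Proof. by case: HL => _ _ hN _ _ It Uy; apply: (hN a).2. Qed.

Lemma phiU (a : chart_idx A) x : cdom a x -> U a (phi a x). Proof. by move=> h; exists x. Qed.

Lemma dt_g_dder (a : chart_idx A) s y i j : dt_g g a s y i j = dder [:: e1] (G a i j) (s, y).
Proof. by rewrite /dt_g mxE /= derive_e1 /G /=. Qed.

Lemma dtt_g_dder (a : chart_idx A) t y i j : dtt_g g a t y i j = dder [:: e1; e1] (G a i j) (t, y).
Proof.
rewrite /= derive_e1 /dtt_g mxE /derive1n /=.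
have -> : (fun s : R => 'D_e1 (G a i j) (s, y)) = derive1 (fun s => g a s y i j).
  by apply/funext => s; rewrite derive_e1 /G /=.
reflexivity.
Qed.

Lemma Nf_eq (a : chart_idx A) x t : cdom a x -> Nf a (t, phi a x) = N t x.
Proof. by move=> h; rewrite /Nf /= psi_phi. Qed.

Lemma dtN_dder (a : chart_idx A) x t : cdom a x -> dt_N N t x = dder [:: e1] (Nf a) (t, phi a x).
Proof.
move=> h; rewrite /= derive_e1 /dt_N.
have -> : (fun s => Nf a (s, phi a x)) = (fun s => N s x).
  by apply/funext => s; rewrite Nf_eq.
reflexivity.
Qed.

Lemma G_der (a : chart_idx A) i j t y : I t -> U a y -> derivable (fun s => g a s y i j) t 1.
Proof. by move=> It Uy; have /derivable_e1 := (smG a i j [::] t y It Uy).1 e1; rewrite /G /=. Qed.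

Lemma Gt_der (a : chart_idx A) i j t y : I t -> U a y -> derivable (fun s => dt_g g a s y i j) t 1.
Proof.
move=> It Uy; rewrite (_ : (fun s => _) = fun s => dder [:: e1] (G a i j) (s, y)); last first.
  by apply/funext => s; rewrite dt_g_dder.
by have /derivable_e1 := (smG a i j [:: e1] t y It Uy).1 e1.
Qed.

Lemma N_der (a : chart_idx A) x t : cdom a x -> I t -> derivable (fun s => N s x) t 1.
Proof.
move=> h It; rewrite (_ : (fun s => _) = fun s => Nf a (s, phi a x)); last first.
  by apply/funext => s; rewrite Nf_eq.
by have /derivable_e1 := (smN a [::] t (phi a x) It (phiU a x h)).1 e1.
Qed.

Lemma nearI t : I t -> \forall s \near t, I s.
Proof. by move=> It; apply: open_nbhs_nbhs; split => //; exact: oI. Qed.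

Lemma dbar2_local x (f1 f2 : R -> R) t0 : I t0 -> (forall t, I t -> f1 t = f2 t) ->
  dbar N x (dbar N x f1) t0 = dbar N x (dbar N x f2) t0.
Proof.
move=> It0 e; rewrite /dbar; apply: f_equal; rewrite !derive1E; apply: near_eq_derive.
near=> s.
have Is : I s by near: s; exact: nearI.
apply: f_equal; rewrite !derive1E; apply: near_eq_derive.
by near=> r; apply: e; near: r; exact: nearI.
Unshelve. all: by end_near.
Qed.

Lemma dbar2_quad (a : chart_idx A) x w t0 : cdom a x -> I t0 ->
  dbar N x (dbar N x (fun t => quad (g a t (phi a x)) w)) t0 =
  (N t0 x)^-2 * quad (dtt_g g a t0 (phi a x) + 2 * dt_N N t0 x *: sff N g a t0 x) w.
Proof.
move=> hx It0.
have Uy : U a (phi a x) := phiU a x hx.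
set y := phi a x.
set fp := fun s => quad (dt_g g a s y) w.
have Efp : forall s, I s -> derive1 (fun t => quad (g a t y) w) s = fp s.
  move=> s Is.
  by rewrite (@quad_derive R (fun t => g a t y) w s (fun i j => G_der a i j s y Is Uy)).2.
have [fpd fpE] : derivable fp t0 1 /\ derive1 fp t0 = quad (dtt_g g a t0 y) w.
  have [d1 d2] := @quad_derive R (fun s => dt_g g a s y) w t0 (fun i j => Gt_der a i j t0 y It0 Uy).
  split => //; rewrite /fp d2; congr quad; apply/matrixP => i j; rewrite !mxE.
  rewrite /derive1n /=.
  have -> : (fun s => dt_g g a s y i j) = derive1 (fun s => g a s y i j).
    by apply/funext => s; rewrite /dt_g mxE.
  reflexivity.
have nd := N_der a x t0 hx It0.
have n0 : N t0 x != 0 by rewrite (gt_eqF (Npos t0 x It0)).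
rewrite /dbar.
have -> : derive1 (fun s => (N s x)^-1 * derive1 (fun t => quad (g a t y) w) s) t0 =
          derive1 (fun s => (N s x)^-1 * fp s) t0.
  rewrite !derive1E; apply: near_eq_derive; near=> s; rewrite Efp //; near: s; exact: nearI.
rewrite derive1E (_ : (fun s => _) = (fun s => (N s x)^-1) * fp) //.
rewrite deriveM; [|exact: derivableV|exact: fpd].
rewrite deriveV; [|exact: n0|exact: nd]. rewrite -!derive1E fpE.
rewrite quadD quadZ /sff quadZ /dt_N -/y -/(fp t0).
rewrite /GRing.scale /=.
set n := N t0 x; set Q := quad _ w; set d := derive1 _ t0; set f0 := fp t0.
by field.
Unshelve. all: by end_near.
Qed.

Lemma quad_t_facts (a : chart_idx A) y w t : I t -> U a y ->
  (forall s, I s -> derivable (fun r => quad (g a r y) w) s 1 /\ derive1 (fun r => quad (g a r y) w) s = quad (dt_g g a s y) w) /\ derivable (fun s => quad (dt_g g a s y) w) t 1 /\ derive1 (fun s => quad (dt_g g a s y) w) t = quad (dtt_g g a t y) w.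
Proof.
move=> It Uy; split.
  move=> s Is; exact: (@quad_derive R (fun t => g a t y) w s (fun i j => G_der a i j s y Is Uy)).
have [d1 d2] := @quad_derive R (fun s => dt_g g a s y) w t (fun i j => Gt_der a i j t y It Uy).
split => //; rewrite d2; congr quad; apply/matrixP => i j; rewrite !mxE.
rewrite /derive1n /=.
have -> : (fun s => dt_g g a s y i j) = derive1 (fun s => g a s y i j).
  by apply/funext => s; rewrite /dt_g mxE.
reflexivity.
Qed.

Lemma part1 t q : I t -> decel_admissible N g t q ->
   forall (a : chart_idx A) x (v : 'rV[R]_3), cdom a x ->
     (2 * N t x ^+ 2)^-1 *
       (quad (dtt_g g a t (phi a x)) v
        + 2 * quad (sff N g a t x) v * dt_N N t x)
     <= (1 - q) * (quad (sff N g a t x) v) ^+ 2 / quad (g a t (phi a x)) v.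
Proof.
move=> It adm a x v hx.
have := adm a x v hx; rewrite /vnorm.
have [->|v0] := eqVneq v 0.
  by move=> _; rewrite !quad0 !(mul0r, mulr0, add0r, expr0n, invr0).
have Uy : U a (phi a x) := phiU a x hx.
set y := phi a x.
set f := fun s => quad (g a s y) v.
set fp := fun s => quad (dt_g g a s y) v.
have fpos : forall s, I s -> 0 < f s.
  by move=> s Is; case: HL => _ _ _ _ [_ pd _]; apply: pd.
have [Ef [fpd fpE]] := quad_t_facts a y v t It Uy.
set S := fun s => Num.sqrt (f s).
have dS : forall s, I s -> derivable S s 1 /\ derive1 S s = fp s * (2 * S s)^-1.
  move=> s Is; have [fd fE] := Ef s Is.
  have sd : derivable Num.sqrt (f s) 1 by have [] := is_derive1_sqrt (fpos s Is).
  have dc : derivable (Num.sqrt \o f) s 1.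
    apply/derivable1_diffP; apply: differentiable_comp; apply/derivable1_diffP; [exact: fd|exact: sd].
  split; first exact: dc.
  rewrite (_ : S = Num.sqrt \o f); last by [].
  rewrite (derive1_comp fd sd) derive1E (derive_sqrt (fpos s Is)).
  by rewrite fE mulrC.
have [Sd SE] := dS t It.
have nd := N_der a x t hx It.
have n0 : N t x != 0 by rewrite (gt_eqF (Npos t x It)).
have S0 : S t != 0 by rewrite gt_eqF // sqrtr_gt0 fpos.
have S2 : f t = S t ^+ 2 by rewrite sqr_sqrtr // ltW // fpos.
rewrite /dbar -/S SE.
have -> : derive1 (fun s => (N s x)^-1 * derive1 S s) t =
          derive1 (fun s => (N s x)^-1 * (fp s * (2 * S s)^-1)) t.
  rewrite !derive1E; apply: near_eq_derive; near=> s.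
  have Is : I s by near: s; exact: nearI.
  by rewrite (dS s Is).2.
have d2S : derivable (fun s => 2 * S s) t 1.
  exact: (derivableM (derivable_cst (2:R) t 1) Sd).
have n2S : 2 * S t != 0 by rewrite mulf_neq0.
have dNi : derivable (fun s => (N s x)^-1) t 1 := derivableV (f := fun s => N s x) n0 nd.
have dSi : derivable (fun s => (2 * S s)^-1) t 1 := derivableV (f := fun s => 2 * S s) n2S d2S.
have dP : derivable (fp * (fun s => (2 * S s)^-1)) t 1 := derivableM fpd dSi.
rewrite derive1E (_ : (fun s => _) = (fun s => (N s x)^-1) * (fp * (fun s => (2 * S s)^-1))); last by [].
rewrite (deriveM dNi dP) (deriveM fpd dSi) (deriveV (f := fun s => N s x) n0 nd) (deriveV (f := fun s => 2 * S s) n2S d2S).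
rewrite (_ : (fun s => 2 * S s) = 2 \*o S); last by [].
rewrite (deriveMl 2 Sd).
rewrite -!derive1E SE fpE /sff quadZ /dt_N -/y -/(fp t) -/(f t) S2.
rewrite /GRing.scale /=.
set n := N t x; set Q := quad _ v; set d := derive1 _ t; set f0 := fp t; set s0 := S t.
have -> : (fp * (fun s => (2 * S s)^-1)) t = f0 * (2 * s0)^-1 by [].
have s0p : 0 < s0 by rewrite sqrtr_gt0 fpos.
rewrite sqrtr_sqr gtr0_norm //.
rewrite -subr_ge0 => H; rewrite -subr_ge0; apply: (le_trans H); rewrite le_eqVlt; apply/orP; left; apply/eqP.
by field; rewrite n0 S0.
Unshelve. all: by end_near.
Qed.

Lemma part2a t0 : I t0 ->
  (forall (a : chart_idx A) x (v : 'rV[R]_3), cdom a x ->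
        quad (dtt_g g a t0 (phi a x) + 2 * dt_N N t0 x *: sff N g a t0 x) v <= 0) ->
  energy_decelerating N g t0.
Proof.
move=> It0 H J sigma e _ _ he.
have e_le0 : forall s, J s -> e s <= 0.
  move=> s Js; have [b hb] := charts_cover A (sigma s).
  rewrite (he s b Js hb) /curve_sqspeed (dbar2_quad b (sigma s) _ t0 hb It0).
  apply: mulr_ge0_le0; last exact: H.
  by rewrite -exprVn exprn_ge0 // invr_ge0 ltW // Npos.
have -> : (fun s => (e s)%:E) = (fun s => - (- e s)%:E)%E.
  by apply/funext => s; rewrite EFinN oppeK.
rewrite integral_ge0N; last by move=> s Js; rewrite lee_fin oppr_ge0 e_le0.
rewrite oppe_le0; apply: integral_ge0 => s Js.
by rewrite lee_fin oppr_ge0 e_le0.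
Qed.

Lemma Uopen (a : chart_idx A) : open (U a).
Proof. by have := @overlap_open _ _ A a a; rewrite setIid. Qed.

Let Phi (a : chart_idx A) (v : 'rV[R]_3) (p : R * 'rV[R]_3) : R :=
  (Nf a p)^-1 * (Nf a p)^-1 *
  quad (\matrix_(i, j) (dder [:: e1; e1] (G a i j) p +
         2 * dder [:: e1] (Nf a) p * (- (2 * Nf a p)^-1 * dder [:: e1] (G a i j) p))) v.

Lemma Phi_eq (a : chart_idx A) x v t : cdom a x ->
  Phi a v (t, phi a x) =
  (N t x)^-2 * quad (dtt_g g a t (phi a x) + 2 * dt_N N t x *: sff N g a t x) v.
Proof.
move=> hx; rewrite /Phi (dtN_dder a x t hx) Nf_eq // -exprVn expr2.
congr (_ * quad _ v); apply/matrixP => i j.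
by rewrite [LHS]mxE -dtt_g_dder -dt_g_dder !mxE.
Qed.

Lemma Phi_cont (a : chart_idx A) v t y : I t -> U a y -> {for (t, y), continuous (Phi a v)}.
Proof.
move=> It Uy.
have cN : {for (t, y), continuous (Nf a)} := (smN a [::] t y It Uy).2.
have cN1 : {for (t, y), continuous (dder [:: e1] (Nf a))} := (smN a [:: e1] t y It Uy).2.
have N0 : Nf a (t, y) != 0 by rewrite /Nf /= gt_eqF // Npos.
have cNi : {for (t, y), continuous (fun p => (Nf a p)^-1)} := continuousV N0 cN.
have cNN : {for (t, y), continuous (fun p => (Nf a p)^-1 * (Nf a p)^-1)}.
  exact: (@continuousM _ _ (fun p => (Nf a p)^-1) (fun p => (Nf a p)^-1) _ cNi cNi).
have cQ : {for (t, y), continuous (fun p => quad (\matrix_(i, j) (dder [:: e1; e1] (G a i j) p +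
         2 * dder [:: e1] (Nf a) p * (- (2 * Nf a p)^-1 * dder [:: e1] (G a i j) p))) v)}.
  apply: quad_cont => i j.
  rewrite (_ : (fun q => _) = (fun q => dder [:: e1; e1] (G a i j) q +
         2 * dder [:: e1] (Nf a) q * (- (2 * Nf a q)^-1 * dder [:: e1] (G a i j) q))); last first.
    by apply/funext => q; rewrite mxE.
  apply: cont_entry => //.
  - exact: (smG a i j [:: e1] t y It Uy).2.
  - exact: (smG a i j [:: e1; e1] t y It Uy).2.
exact: (@continuousM _ _ (fun p => (Nf a p)^-1 * (Nf a p)^-1) _ _ cNN cQ).
Qed.

Lemma curve_ok (a : chart_idx A) (v y : 'rV[R]_3) eps :
  (forall s, ball (0:R) eps s -> U a (s *: v + y)) ->
  smooth_curve A (ball (0:R) eps) (fun s => psi a (s *: v + y)).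
Proof.
move=> HU; set W := ball (0:R) eps.
have oW : open W := ball_open 0 eps.
exists W; split => // s Ws.
exists a, W; split => //.
- exact: (@phi_psi _ _ A a _ (HU s Ws)).1.
- by move=> _ [r Wr <-]; exact: (@phi_psi _ _ A a _ (HU r Wr)).1.
split => // vs p Wp.
have loc : forall r, W r -> phi a (psi a (r *: v + y)) = r *: v + y.
  by move=> r Wr; exact: (@phi_psi _ _ A a _ (HU r Wr)).2.
have eqd := @dder_local R _ _ W _ _ oW loc.
have nq : {near p, dder vs (fun r : R => r *: v + y) =1 dder vs (fun r => phi a (psi a (r *: v + y)))}.
  have : nbhs p W by apply: open_nbhs_nbhs; split.
  by apply: filterS => q Wq; rewrite eqd.
have [da ca] := @aff_smooth R _ v y vs p.
split.
  by move=> u; exact: near_eq_derivable nq (da u).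
apply: (cvg_trans (near_eq_cvg nq)).
by rewrite (eqd vs p Wp).
Qed.

Lemma part2b t0 : I t0 -> energy_decelerating N g t0 ->
  forall (a : chart_idx A) x (v : 'rV[R]_3), cdom a x ->
    quad (dtt_g g a t0 (phi a x) + 2 * dt_N N t0 x *: sff N g a t0 x) v <= 0.
Proof.
move=> It0 ED a x v hx; rewrite leNgt; apply/negP => Qpos.
have Uy : U a (phi a x) := phiU a x hx.
have P0 : 0 < Phi a v (t0, phi a x).
  rewrite Phi_eq //; apply: mulr_gt0 => //.
  by rewrite -exprVn exprn_gt0 // invr_gt0 Npos.
set y := phi a x.
set c := Phi a v (t0, y) / 2.
have c0 : 0 < c by rewrite divr_gt0.
have cc : c < Phi a v (t0, y) by rewrite /c; lra.
have cys : (fun s : R => s *: v + y) @ (0:R) --> y.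
  have := (@aff_smooth R _ v y [::] 0).2 => h.
  rewrite -[X in _ --> X](_ : 0 *: v + y = y); [exact: h | by rewrite scale0r add0r].
have n1 : \forall s \near (0:R), U a (s *: v + y).
  by apply: cys; apply: open_nbhs_nbhs; split; [exact: Uopen | exact: Uy].
have cphi : (fun s : R => Phi a v (t0, s *: v + y)) @ (0:R) --> Phi a v (t0, y).
  apply: (cvg_comp (fun s : R => (t0, s *: v + y)) (Phi a v)).
    exact: (cvg_pair (cvg_cst t0) cys).
  exact: (Phi_cont a v t0 y It0 Uy).
have n2 : \forall s \near (0:R), c < Phi a v (t0, s *: v + y) := cvgr_gt _ cphi _ cc.
have [eps eps0 Heps] : exists2 eps : R, 0 < eps &
    forall s, ball (0:R) eps s -> U a (s *: v + y) /\ c < Phi a v (t0, s *: v + y).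
  have : \forall s \near (0:R), U a (s *: v + y) /\ c < Phi a v (t0, s *: v + y).
    near=> s; split; [near: s; exact: n1 | near: s; exact: n2].
  by move/nbhs_ballP => [eps eps0 H]; exists eps => // s Bs; exact: H.
set J := ball (0:R) eps.
set sigma := fun s : R => psi a (s *: v + y).
have sd : forall s, J s -> cdom a (sigma s) /\ phi a (sigma s) = s *: v + y.
  by move=> s Js; exact: (@phi_psi _ _ A a _ (Heps s Js).1).
set e := fun s : R => Phi a v (t0, s *: v + y).
have he : forall s (b : chart_idx A), J s -> cdom b (sigma s) ->
    e s = dbar N (sigma s) (dbar N (sigma s) (curve_sqspeed g b sigma s)) t0.
  move=> s b Js hb; have [hs ps] := sd s Js.
  rewrite /e -ps (Phi_eq a (sigma s) v t0 hs) -(dbar2_quad a (sigma s) v t0 hs It0).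
  apply: dbar2_local => // t It.
  rewrite /curve_sqspeed.
  have -> : 'D_1 (fun r => phi b (sigma r)) s = 'D_v (fun z => phi b (psi a z)) (phi a (sigma s)).
    rewrite ps; exact: (@derive_affine R _ _ (fun z => phi b (psi a z)) v y s).
  by case: HL => _ _ _ _ [_ _ law]; apply: law.
have Jint : is_interval J by rewrite /J ball_itv; exact: interval_is_interval.
have := ED J sigma e Jint (curve_ok a v y eps (fun s Js => (Heps s Js).1)) he.
have lb : (\int[@lebesgue_measure R]_(s in J) (cst c%:E) s <=
           \int[@lebesgue_measure R]_(s in J) (e s)%:E)%E.
  apply: ge0_le_integral_nm => s Js; rewrite lee_fin; first exact: ltW.
  exact: ltW (Heps s Js).2.
move=> H; have := le_trans lb H.
rewrite integral_cst; last exact: measurable_realfun.measurable_ball.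
rewrite [X in (_ * X)%E](@lebesgue_measure_ball R 0 eps (ltW eps0)).
rewrite -EFinM lee_fin lt_geF //; apply: mulr_gt0 => //.
by rewrite mulr2n; lra.
Unshelve. all: by end_near.
Qed.

End Main.

Theorem lemma3p1 (R : realType) (M : Type) (A : smooth_manifold3 R M)
  (I : set R) (N : R -> M -> R)
  (g : chart_idx A -> R -> 'rV[R]_3 -> 'M[R]_3) :
  lorentz_data I N g ->
  (* (1) *)
  (forall (t q : R), I t -> decel_admissible N g t q ->
   forall a x (v : 'rV[R]_3), cdom a x ->
     (2 * N t x ^+ 2)^-1 *
       (quad (dtt_g g a t (phi a x)) v
        + 2 * quad (sff N g a t x) v * dt_N N t x)
     <= (1 - q) * (quad (sff N g a t x) v) ^+ 2 / quad (g a t (phi a x)) v)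
  /\
  (* (2) *)
  (forall t0 : R, I t0 ->
     (energy_decelerating N g t0 <->
      forall a x (v : 'rV[R]_3), cdom a x ->
        quad (dtt_g g a t0 (phi a x) + 2 * dt_N N t0 x *: sff N g a t0 x) v <= 0)).
Proof.
move=> HL; split.
  by move=> t q It adm a x v hx; exact: (@part1 R M A I N g HL t q It adm a x v hx).
move=> t0 It0; split.
  exact: (@part2b R M A I N g HL t0 It0).
exact: (@part2a R M A I N g HL t0 It0).
Qed.
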